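(* Let $G$ and $H$ be connected graphs such that $G_{SR}$ and $H_{SR}$ are vertex-transitive. Then $$dim_s(G\square H)=\min\{|\partial(G)|\,dim_s(H),\ |\partial(H)|\,dim_s(G)\}.$$
   Context: Graphs are finite, simple, undirected; for connected $G$, $d_G$ is the shortest-path distance and $I_G[u,v]$ is the set of vertices lying on some shortest $u$–$v$ path. A vertex $w$ strongly resolves vertices $u,v$ if $v\in I_G[u,w]$ or $u\in I_G[v,w]$. A strong resolving set of $G$ is a set $S\subseteq V(G)$ such that every pair of vertices is strongly resolved by some vertex of $S$; $dim_s(G)$ is the minimum cardinality of such a set. A vertex $u$ is maximally distant from $v$ if $d_G(v,w)\le d_G(u,v)$ for every neighbor $w$ of $u$; distinct $u,v$ are mutually maximally distant if each is maximally distant from the other. The boundary $\partial(G)$ is the set of vertices mutually maximally distant with some vertex. The strong resolving graph $G_{SR}$ has vertex set $\partial(G)$, two vertices adjacent iff they are mutually maximally distant in $G$. $G\square H$ denotes the Cartesian product: vertex set $V(G)\times V(H)$, $(a,b)\sim(c,d)$ iff ($a=c$ and $bd\in E(H)$) or ($b=d$ and $ac\in E(G)$). *)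

(* Defs.v *)
From mathcomp Require Import all_boot all_order all_fingroup.
Set Implicit Arguments. Unset Strict Implicit. Unset Printing Implicit Defensive.

Section Graphs.
Variables (T : finType) (e : rel T).

Definition simple_graph : Prop := symmetric e /\ irreflexive e.

Definition connected_graph : Prop := forall x y : T, connect e x y.

Fixpoint ball (x : T) (n : nat) : {set T} :=
  if n is m.+1 then ball x m :|: [set y | [exists z in ball x m, e z y]]
  else [set x].

(* shortest-path distance: the least n with y within n steps of x
   (any walk-connected pair has distance < #|T|) *)
Definition dist (x y : T) : nat :=
  find (fun n => y \in ball x n) (iota 0 #|T|).

Definition interval (u v : T) : {set T} :=
  [set w | dist u w + dist w v == dist u v].

Definition strongly_resolves (w u v : T) : bool :=
  (v \in interval u w) || (u \in interval v w).

Definition strong_resolving_set (S : {set T}) : bool :=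
  [forall u, forall v, (u != v) ==> [exists w in S, strongly_resolves w u v]].

(* strong metric dimension: minimum cardinality of a strong resolving set
   (V(G) itself is one, so the default value #|T| is harmless) *)
Definition sdim : nat :=
  \big[minn/#|T|]_(S : {set T} | strong_resolving_set S) #|S|.

Definition max_distant (u v : T) : bool :=
  [forall w, e u w ==> (dist v w <= dist u v)].

Definition mutually_max_distant (u v : T) : bool :=
  [&& u != v, max_distant u v & max_distant v u].

Definition boundary : {set T} := [set u | [exists v, mutually_max_distant u v]].

(* G_SR has vertex set boundary and adjacency mutually_max_distant.
   Vertex-transitivity: for all x, y in boundary there is an automorphism of
   G_SR mapping x to y; an automorphism of G_SR is represented by a
   permutation of T that maps the boundary into (hence onto) itself and
   preserves (both ways) adjacency of G_SR on the boundary. *)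
Definition SR_automorphism (f : {perm T}) : Prop :=
  (forall a, a \in boundary -> f a \in boundary) /\
  (forall a b, a \in boundary -> b \in boundary ->
     mutually_max_distant (f a) (f b) = mutually_max_distant a b).

Definition SR_vertex_transitive : Prop :=
  forall x y, x \in boundary -> y \in boundary ->
    exists f : {perm T}, SR_automorphism f /\ f x = y.

End Graphs.

Definition cart_prod (T1 T2 : finType) (e1 : rel T1) (e2 : rel T2) : rel (T1 * T2) :=
  fun x y => ((x.1 == y.1) && e2 x.2 y.2) || ((x.2 == y.2) && e1 x.1 y.1).

(* Main.v *)
Require Import Defs.
From mathcomp Require Import all_boot all_order all_fingroup.
From mathcomp Require Import zify.
Set Implicit Arguments. Unset Strict Implicit. Unset Printing Implicit Defensive.
Set Warnings "-notation-overridden".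

Section Ball.
Variables (T : finType) (e : rel T).

Lemma ball0 x y : (y \in ball e x 0) = (y == x).
Proof. by rewrite /= inE. Qed.

Lemma ballS x n y : (y \in ball e x n.+1) =
  (y \in ball e x n) || [exists z in ball e x n, e z y].
Proof. by rewrite /= !inE. Qed.

Lemma ball_self x n : x \in ball e x n.
Proof. elim: n => [|n IH]; first by rewrite ball0. by rewrite ballS IH. Qed.

Lemma ball_mono x m n : m <= n -> {subset ball e x m <= ball e x n}.
Proof.
move=> mn y; elim: n mn => [|n IH]; first by rewrite leqn0 => /eqP ->.
rewrite leq_eqVlt => /orP [/eqP -> //| ]; rewrite ltnS => /IH H /H.
by rewrite ballS => ->.
Qed.

Lemma ball_edge x y n : y \in ball e x n -> forall z, e y z -> z \in ball e x n.+1.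
Proof. by move=> Hy z Hz; rewrite ballS; apply/orP; right; apply/existsP; exists y; rewrite Hy. Qed.

Lemma ball_trans x y z m n : y \in ball e x m -> z \in ball e y n -> z \in ball e x (m + n).
Proof.
move=> Hy; elim: n z => [|n IH] z; first by rewrite ball0 addn0 => /eqP ->.
rewrite ballS addnS => /orP [/IH H| /existsP [w /andP [Hw Hwz]]].
  exact: (ball_mono (leqnSn _)).
exact: (ball_edge (IH _ Hw)).
Qed.

Lemma ball1 x y : e x y -> y \in ball e x 1.
Proof. by move=> H; apply: (ball_edge (ball_self x 0)). Qed.

Lemma ball_sym : symmetric e -> forall x y n, y \in ball e x n -> x \in ball e y n.
Proof.
move=> se x y n; elim: n y => [|n IH] y; first by rewrite !ball0 eq_sym.
rewrite ballS => /orP [/IH H| /existsP [z /andP [Hz Hzy]]].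
  exact: (ball_mono (leqnSn _)).
have H1 : z \in ball e y 1 by apply: ball1; rewrite se.
by have := ball_trans H1 (IH _ Hz); rewrite add1n.
Qed.

Lemma ball_connect x y n : y \in ball e x n -> connect e x y.
Proof.
elim: n y => [|n IH] y; first by rewrite ball0 => /eqP ->.
rewrite ballS => /orP [/IH //| /existsP [z /andP [Hz Hzy]]].
by apply: connect_trans (IH _ Hz) (connect1 Hzy).
Qed.

Lemma path_ball x p : path e x p -> last x p \in ball e x (size p).
Proof.
elim/last_ind: p => [|p z IH]; first by rewrite ball_self.
rewrite rcons_path last_rcons size_rcons => /andP [Hp Hz].
exact: ball_edge (IH Hp) _ Hz.
Qed.

Lemma connect_ball x y : connect e x y -> exists2 n, n < #|T| & y \in ball e x n.
Proof.
move/connectP => [p Hp ->].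
case: (shortenP Hp) => q Hq Huq _.
exists (size q); last exact: path_ball.
by have := max_card (mem (x :: q)); rewrite (card_uniqP Huq).
Qed.

Hypothesis conn : connected_graph e.

Lemma dist_ball x y : y \in ball e x (dist e x y).
Proof.
rewrite /dist; set p := fun n => y \in ball e x n.
have [n Hn Hb] := connect_ball (conn x y).
have Hh : has p (iota 0 #|T|) by apply/hasP; exists n; rewrite // mem_iota.
have := nth_find 0 Hh; rewrite nth_iota //.
have := Hh; rewrite has_find size_iota. by [].
Qed.

Lemma dist_min x y n : y \in ball e x n -> dist e x y <= n.
Proof.
move=> Hb; rewrite leqNgt; apply/negP => Hlt.
have Hn : n < size (iota 0 #|T|).
  by apply: leq_trans Hlt (find_size _ _).
have := before_find 0 Hlt; rewrite nth_iota ?add0n ?Hb //.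
by rewrite size_iota in Hn.
Qed.

Lemma dist_leP x y n : (dist e x y <= n) = (y \in ball e x n).
Proof.
apply/idP/idP; first by move=> H; apply: ball_mono H _ (dist_ball x y).
exact: dist_min.
Qed.

Lemma dist_xx x : dist e x x = 0.
Proof. by apply/eqP; rewrite -leqn0 dist_leP ball_self. Qed.

Lemma dist_eq0 x y : (dist e x y == 0) = (x == y).
Proof.
apply/idP/idP; last by move/eqP->; rewrite dist_xx.
by rewrite -leqn0 dist_leP ball0 eq_sym.
Qed.

Lemma dist_tri x y z : dist e x z <= dist e x y + dist e y z.
Proof. by rewrite dist_leP; apply: ball_trans (dist_ball x y) (dist_ball y z). Qed.

Lemma dist_edge x y : e x y -> dist e x y <= 1.
Proof. by move=> H; rewrite dist_leP ball1. Qed.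

Hypothesis se : symmetric e.

Lemma dist_sym x y : dist e x y = dist e y x.
Proof.
by apply/eqP; rewrite eqn_leq !dist_leP; apply/andP; split; apply: ball_sym;
  rewrite // -dist_leP.
Qed.

Lemma dist_lip x y z : e y z -> dist e x z <= (dist e x y).+1.
Proof. by move=> H; apply: leq_trans (dist_tri x y z) _; rewrite -addn1 leq_add2l dist_edge. Qed.

Lemma dist_lip' x y z : e y z -> dist e x y <= (dist e x z).+1.
Proof. by move=> H; apply: dist_lip; rewrite se. Qed.

Lemma dist_step x y n : dist e x y = n.+1 -> exists z, e z y && (dist e x z == n).
Proof.
move=> Hd; have := dist_ball x y; rewrite Hd ballS => /orP [H|].
  by have := dist_min H; rewrite Hd ltnn.
move/existsP => [z /andP [Hz Hzy]]; exists z; rewrite Hzy /=.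
rewrite eqn_leq dist_leP Hz /=.
by have := dist_lip x Hzy; rewrite Hd ltnS.
Qed.

End Ball.

Section Oell.
Variables (T : finType) (e : rel T).
Hypotheses (se : symmetric e) (ie : irreflexive e) (conn : connected_graph e)
  (c2 : 1 < #|T|).
Local Notation d := (dist e).
Local Notation mmd := (mutually_max_distant e).
Local Notation bd := (boundary e).

Definition cov (S : {set T}) :=
  [forall u, forall v, mmd u v ==> (u \in S) || (v \in S)].

Lemma mmd_sym u v : mmd u v = mmd v u.
Proof.
rewrite /mutually_max_distant eq_sym.
by case: (max_distant e u v); case: (max_distant e v u); rewrite ?andbF ?andbT.
Qed.

Lemma mmd_bd u v : mmd u v -> (u \in bd) && (v \in bd).
Proof.
move=> H; rewrite !inE; apply/andP; split; apply/existsP;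
  [exists v | exists u; rewrite mmd_sym]; done.
Qed.

Lemma has_nbr u : exists z, e u z.
Proof.
have [y Hy] : exists y, y != u.
  case: (pickP (fun y => y != u)) => [y Hy|H0]; first by exists y.
  have : #|T| <= 1.
    rewrite -(card1 u); apply: subset_leq_card; apply/subsetP => z _.
    by rewrite inE; have := H0 z; move/negbT; rewrite negbK.
  by rewrite leqNgt c2.
have : d y u != 0 by rewrite dist_eq0.
case Hd: (d y u) => [|k] // _.
have [z /andP [Hz _]] := dist_step conn Hd.
by exists z; rewrite se.
Qed.

Lemma md_neq u v : max_distant e u v -> u != v.
Proof.
move=> /forallP H; apply/negP => /eqP Huv; subst v.
have [z Hz] := has_nbr u.
have := H z; rewrite Hz dist_xx // leqn0 dist_eq0 // => /eqP Huz.
by rewrite Huz ie in Hz.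
Qed.

Lemma mmd_interval u v w : mmd u v -> v \in interval e u w -> w = v.
Proof.
move=> /and3P [_ _ Hmd] Hi; rewrite inE in Hi; move/eqP: Hi => Hi.
case: (eqVneq w v) => // Hwv; exfalso.
have : d w v != 0 by rewrite dist_eq0 // eq_sym.
case Hd: (d w v) => [|k] // _.
have [z /andP [Hz /eqP Hwz]] := dist_step conn Hd.
have := forallP Hmd z; rewrite se Hz /= => H1.
have H2 := dist_tri conn u z w.
have H3 : d z w = d w z by rewrite dist_sym.
have H4 : d v w = d w v by rewrite dist_sym.
have H5 : d v u = d u v by rewrite dist_sym.
lia.
Qed.

Lemma srs_cov S : strong_resolving_set e S -> cov S.
Proof.
move=> /forallP H; apply/forallP => u; apply/forallP => v; apply/implyP => Hm.
have Huv : u != v by case/and3P: Hm.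
have /existsP [w /andP [HwS Hw]] := implyP (forallP (H u) v) Huv.
case/orP: Hw => Hi.
  by rewrite -(mmd_interval Hm Hi) HwS orbT.
by rewrite mmd_sym in Hm; rewrite -(mmd_interval Hm Hi) HwS.
Qed.

Definition Pext v u x := d v u + d u x == d v x.

Lemma ext_exists v u : exists x, Pext v u x /\ forall w, Pext v u w -> d v w <= d v x.
Proof.
have Pu : Pext v u u by rewrite /Pext dist_xx // addn0.
case: (arg_maxnP (fun x => d v x) Pu) => x Hx Hmax.
by exists x; split.
Qed.

Lemma ext_md v u x : Pext v u x -> (forall w, Pext v u w -> d v w <= d v x) ->
  forall w, e x w -> d v w <= d v x.
Proof.
move=> /eqP Px Hmax w Hw; rewrite leqNgt; apply/negP => Hlt.
have H1 := dist_lip conn v Hw.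
have H2 := dist_lip conn u Hw.
have H3 := dist_tri conn v u w.
have : Pext v u w by rewrite /Pext; apply/eqP; lia.
move/Hmax; lia.
Qed.

Lemma cov_srs S : cov S -> strong_resolving_set e S.
Proof.
move=> /forallP HS; apply/forallP => u; apply/forallP => v; apply/implyP => Huv.
have [x [Px Hx]] := ext_exists v u.
have [y [Py Hy]] := ext_exists x v.
have Hmdx := ext_md Px Hx.
have Hmdy := ext_md Py Hy.
move/eqP: Px => Px; move/eqP: Py => Py.
have Duv : d u v != 0 by rewrite dist_eq0.
have S1 : d x v = d v x by rewrite dist_sym.
have S2 : d y x = d x y by rewrite dist_sym.
have S3 : d v u = d u v by rewrite dist_sym.
have S4 : d x u = d u x by rewrite dist_sym.
have S5 : d y v = d v y by rewrite dist_sym.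
have Hm : mmd x y.
  apply/and3P; split.
  - by rewrite -(dist_eq0 conn) -S2; lia.
  - apply/forallP => w; apply/implyP => Hw.
    rewrite leqNgt; apply/negP => Hlt.
    have H1 := dist_lip conn y Hw.
    have H2 := dist_tri conn y v w.
    have H3 := dist_lip conn v Hw.
    have H4 := dist_lip conn u Hw.
    have H5 := dist_tri conn v u w.
    have : Pext v u x by apply/eqP.
    have Hpw : Pext v u w by rewrite /Pext; apply/eqP; have := dist_sym conn se y w; lia.
    by move=> _; have := Hx _ Hpw; have := dist_sym conn se y w; lia.
  - apply/forallP => w; apply/implyP => Hw.
    by have := Hmdy _ Hw; rewrite S2.
have := implyP (forallP (HS x) y) Hm.
case/orP => HxS; apply/existsP.
  by exists x; rewrite HxS /strongly_resolves !inE Px eqxx orbT.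
exists y; rewrite HxS /strongly_resolves !inE.
have T1 := dist_tri conn u v y.
have T2 := dist_tri conn x u y.
apply/orP; left; apply/eqP; lia.
Qed.

Lemma srsE S : strong_resolving_set e S = cov S.
Proof. by apply/idP/idP; [apply: srs_cov | apply: cov_srs]. Qed.

Lemma bigmin_le_seq (I : eqType) (r : seq I) (P : pred I) (F : I -> nat) x i :
  i \in r -> P i -> \big[minn/x]_(j <- r | P j) F j <= F i.
Proof.
elim: r => [//|a r IH]; rewrite inE big_cons => /orP [/eqP <- -> | Hi HP].
  exact: geq_minl.
case: (P a); last exact: IH.
by apply: leq_trans (geq_minr _ _) (IH Hi HP).
Qed.

Lemma sdim_le S : cov S -> sdim e <= #|S|.
Proof.
move=> H; rewrite /sdim; apply: bigmin_le_seq; first by rewrite mem_index_enum.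
by rewrite srsE.
Qed.

Lemma sdim_ge m : m <= #|T| -> (forall S, cov S -> m <= #|S|) -> m <= sdim e.
Proof.
move=> Hm H; rewrite /sdim; apply: (big_ind (fun k => m <= k)) => //.
  by move=> a b Ha Hb; rewrite leq_min Ha Hb.
by move=> S; rewrite srsE; apply: H.
Qed.

Lemma cov_setT : cov setT.
Proof. by apply/forallP => u; apply/forallP => v; rewrite !inE implybT. Qed.

Lemma cov_bd : cov bd.
Proof.
apply/forallP => u; apply/forallP => v; apply/implyP => /mmd_bd /andP [-> _] //.
Qed.

Lemma min_cover : exists C, [/\ cov C, C \subset bd & #|C| = sdim e].
Proof.
case: (arg_minnP (fun S : {set T} => #|S|) cov_setT) => C0 HC0 Hmin.
have E0 : #|C0| = sdim e.
  apply/eqP; rewrite eqn_leq sdim_le // andbT; apply: sdim_ge => //.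
  by apply: max_card.
exists (C0 :&: bd); split.
- apply/forallP => u; apply/forallP => v; apply/implyP => Hm.
  have /andP [Hu Hv] := mmd_bd Hm.
  by have := implyP (forallP (forallP HC0 u) v) Hm; rewrite !in_setI Hu Hv !andbT.
- exact: subsetIr.
- apply/eqP; rewrite eqn_leq -{1}E0 subset_leq_card ?subsetIl //=.
  apply: sdim_le.
  apply/forallP => u; apply/forallP => v; apply/implyP => Hm.
  have /andP [Hu Hv] := mmd_bd Hm.
  by have := implyP (forallP (forallP HC0 u) v) Hm; rewrite !in_setI Hu Hv !andbT.
Qed.

End Oell.

Section Prod.
Variables (T1 T2 : finType) (e1 : rel T1) (e2 : rel T2).
Hypotheses (se1 : symmetric e1) (ie1 : irreflexive e1) (conn1 : connected_graph e1)
  (c1 : 1 < #|T1|).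
Hypotheses (se2 : symmetric e2) (ie2 : irreflexive e2) (conn2 : connected_graph e2)
  (c2 : 1 < #|T2|).
Local Notation eP := (cart_prod e1 e2).

Lemma cart_sym : symmetric eP.
Proof.
move=> [a b] [c d]; rewrite /cart_prod /= se1 se2 (eq_sym a) (eq_sym b) //.
Qed.

Lemma cart_irr : irreflexive eP.
Proof. by move=> [a b]; rewrite /cart_prod /= ie1 ie2 !andbF. Qed.

Lemma ballP_l a b c m : c \in ball e1 a m -> (c, b) \in ball eP (a, b) m.
Proof.
elim: m c => [|m IH] c; first by rewrite !ball0 => /eqP ->.
rewrite ballS => /orP [/IH H| /existsP [z /andP [Hz Hzc]]].
  exact: (ball_mono (leqnSn _)).
by apply: (ball_edge (IH _ Hz)); rewrite /cart_prod /= Hzc eqxx orbT.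
Qed.

Lemma ballP_r a b d m : d \in ball e2 b m -> (a, d) \in ball eP (a, b) m.
Proof.
elim: m d => [|m IH] d; first by rewrite !ball0 => /eqP ->.
rewrite ballS => /orP [/IH H| /existsP [z /andP [Hz Hzd]]].
  exact: (ball_mono (leqnSn _)).
by apply: (ball_edge (IH _ Hz)); rewrite /cart_prod /= Hzd eqxx.
Qed.

Lemma ballP_sum a b c d :
  (c, d) \in ball eP (a, b) (dist e1 a c + dist e2 b d).
Proof.
apply: (@ball_trans _ _ _ (c, b)); first exact/ballP_l/dist_ball.
exact/ballP_r/dist_ball.
Qed.

Lemma cart_conn : connected_graph eP.
Proof. by move=> [a b] [c d]; apply: ball_connect (ballP_sum a b c d). Qed.

Lemma ballP_ge x n y : y \in ball eP x n -> dist e1 x.1 y.1 + dist e2 x.2 y.2 <= n.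
Proof.
elim: n y => [|n IH] y.
  by rewrite ball0 => /eqP ->; rewrite !dist_xx.
rewrite ballS => /orP [/IH H| /existsP [z /andP [Hz Hzy]]]; first lia.
have := IH _ Hz.
have Q1 := dist_tri conn1 x.1 z.1 y.1.
have Q2 := dist_tri conn2 x.2 z.2 y.2.
move: Hzy; rewrite /cart_prod => /orP [/andP [/eqP E H] | /andP [/eqP E H]].
  have E1 : dist e1 z.1 y.1 = 0 by rewrite E dist_xx.
  have := dist_edge conn2 H; lia.
have E1 : dist e2 z.2 y.2 = 0 by rewrite E dist_xx.
have := dist_edge conn1 H; lia.
Qed.

Lemma distP x y : dist eP x y = dist e1 x.1 y.1 + dist e2 x.2 y.2.
Proof.
apply/eqP; rewrite eqn_leq; apply/andP; split.
  by case: x y => [a b] [c d]; exact: (dist_min (ballP_sum a b c d)).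
exact/ballP_ge/dist_ball/cart_conn.
Qed.

Lemma mdP u v : max_distant eP u v =
  max_distant e1 u.1 v.1 && max_distant e2 u.2 v.2.
Proof.
case: u v => [u1 u2] [v1 v2] /=.
apply/idP/idP.
  move=> /forallP H; apply/andP; split; apply/forallP => w; apply/implyP => Hw.
    have := implyP (H (w, u2)); rewrite /cart_prod /= Hw eqxx orbT !distP /= => /(_ isT).
    have := dist_sym conn2 se2 v2 u2; lia.
  have := implyP (H (u1, w)); rewrite /cart_prod /= Hw eqxx /= !distP /= => /(_ isT).
  have := dist_sym conn1 se1 v1 u1; lia.
move=> /andP [/forallP H1 /forallP H2]; apply/forallP => [[w1 w2]]; apply/implyP.
rewrite /cart_prod /= !distP /= => /orP [/andP [/eqP E H] | /andP [/eqP E H]]; subst.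
  have := implyP (H2 w2) H; have := dist_sym conn1 se1 v1 w1; lia.
have := implyP (H1 w1) H; have := dist_sym conn2 se2 v2 w2; lia.
Qed.

Lemma mmdP u v : mutually_max_distant eP u v =
  mutually_max_distant e1 u.1 v.1 && mutually_max_distant e2 u.2 v.2.
Proof.
rewrite /mutually_max_distant !mdP.
case H1: (max_distant e1 u.1 v.1); rewrite ?andbF //=.
case H2: (max_distant e2 u.2 v.2); rewrite ?andbF ?andbT //=.
have N1 := md_neq se1 ie1 conn1 c1 H1.
have N2 := md_neq se2 ie2 conn2 c2 H2.
rewrite N1 N2 /=.
have -> : u != v by apply: contraNneq N1 => ->.
by case: (max_distant e1 v.1 u.1); case: (max_distant e2 v.2 u.2).
Qed.

Lemma cart_card : 1 < #|{: T1 * T2}|.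
Proof. rewrite card_prod; nia. Qed.

End Prod.

Lemma sum_b2n (T : finType) (X : {set T}) (P : pred T) :
  \sum_(x in X) (P x : nat) = #|[set x in X | P x]|.
Proof.
rewrite -sum1_card big_mkcond [RHS]big_mkcond; apply: eq_bigr => x _.
by rewrite inE; case: (x \in X); case: (P x).
Qed.

Lemma sum_eq1 (T : finType) (B : {set T}) (y : T) :
  \sum_(b in B) (y == b : nat) = (y \in B).
Proof.
case: (boolP (y \in B)) => H.
  rewrite (bigD1 y) //= eqxx big1 // => b /andP [_ Hb]; by rewrite eq_sym (negbTE Hb).
by rewrite big1 // => b Hb; case: eqP => // E; rewrite E Hb in H.
Qed.

Section VT.
Variables (T : finType) (e : rel T).
Hypotheses (se : symmetric e) (ie : irreflexive e) (conn : connected_graph e)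
  (c2 : 1 < #|T|) (vt : SR_vertex_transitive e).
Local Notation r := (mutually_max_distant e).
Local Notation bd := (boundary e).

Definition indep (A : {set T}) := [forall a, forall b, (a \in A) && (b \in A) ==> ~~ r a b].
Definition NA (A : {set T}) := [set x in bd | [exists a in A, (a == x) || r a x]].
Definition autb (s : {perm T}) :=
  [forall a, (a \in bd) ==> (s a \in bd)] &&
  [forall a, forall b, (a \in bd) && (b \in bd) ==> (r (s a) (s b) == r a b)].
Definition Aut := [set s | autb s].
Definition Ncnt x b := #|[set s in Aut | s x == b]|.

Lemma autbP s : reflect (SR_automorphism e s) (autb s).
Proof.
apply: (iffP andP) => [[/forallP H1 /forallP H2]|[H1 H2]]; split.
- by move=> a Ha; apply: implyP (H1 a) Ha.
- by move=> a b Ha Hb; apply/eqP; apply: implyP (forallP (H2 a) b) _; rewrite Ha Hb.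
- by apply/forallP => a; apply/implyP; apply: H1.
- apply/forallP => a; apply/forallP => b; apply/implyP => /andP [Ha Hb].
  by rewrite H2.
Qed.

Lemma aut_bd s a : s \in Aut -> a \in bd -> s a \in bd.
Proof. by rewrite inE => /andP [/forallP H _] Ha; apply: implyP (H a) Ha. Qed.

Lemma aut_r s a b : s \in Aut -> a \in bd -> b \in bd -> r (s a) (s b) = r a b.
Proof.
rewrite inE => /andP [_ /forallP H] Ha Hb; apply/eqP.
by apply: implyP (forallP (H a) b) _; rewrite Ha Hb.
Qed.

Lemma autM s t : s \in Aut -> t \in Aut -> (s * t)%g \in Aut.
Proof.
move=> Hs Ht; rewrite inE; apply/andP; split.
  by apply/forallP => a; apply/implyP => Ha; rewrite permM; apply: aut_bd => //; apply: aut_bd.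
apply/forallP => a; apply/forallP => b; apply/implyP => /andP [Ha Hb].
by rewrite !permM aut_r ?aut_bd // aut_r.
Qed.

Lemma aut1 : (1%g : {perm T}) \in Aut.
Proof.
rewrite inE; apply/andP; split.
  by apply/forallP => a; rewrite perm1 implybb.
by apply/forallP => a; apply/forallP => b; rewrite !perm1 eqxx implybT.
Qed.

Lemma aut_onto s x : s \in Aut -> x \in bd -> exists2 y, y \in bd & s y = x.
Proof.
move=> Hs Hx.
have E : s @: bd = bd.
  apply/eqP; rewrite eqEcard card_imset ?leqnn ?andbT; last exact: perm_inj.
  by apply/subsetP => z /imsetP [y Hy ->]; apply: aut_bd.
by rewrite -E in Hx; case/imsetP: Hx => y Hy ->; exists y.
Qed.

Lemma vt_aut x y : x \in bd -> y \in bd -> exists2 s, s \in Aut & s x = y.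
Proof.
by move=> Hx Hy; have [s [Hs Hsx]] := vt Hx Hy; exists s; rewrite // inE; apply/autbP.
Qed.

Lemma Ncnt_le x b x' b' : x \in bd -> b \in bd -> x' \in bd -> b' \in bd ->
  Ncnt x b <= Ncnt x' b'.
Proof.
move=> Hx Hb Hx' Hb'.
have [t1 Ht1 E1] := vt_aut Hx' Hx.
have [t2 Ht2 E2] := vt_aut Hb Hb'.
rewrite /Ncnt -(card_imset _ (f := fun s => (t1 * s * t2)%g)); last first.
  by move=> s s' /= /mulIg /mulgI.
apply: subset_leq_card; apply/subsetP => z /imsetP [s].
rewrite !inE => /andP [Hs /eqP Hsx] ->; rewrite !permM E1 Hsx E2 eqxx andbT.
have Hs' : s \in Aut by rewrite inE. by have := autM (autM Ht1 Hs') Ht2; rewrite inE.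
Qed.

Lemma cnt x (B : {set T}) : #|[set s in Aut | s x \in B]| = \sum_(b in B) Ncnt x b.
Proof.
rewrite -(sum_b2n Aut (fun s => s x \in B)).
under [RHS]eq_bigr => b _ do rewrite /Ncnt -(sum_b2n Aut (fun s => s x == b)).
rewrite exchange_big /=; apply: eq_bigr => s _.
by rewrite sum_eq1.
Qed.

Lemma card_inter (B X : {set T}) (s : {perm T}) :
  #|B :&: s @: X| = \sum_(x in X) (s x \in B : nat).
Proof.
rewrite (sum_b2n X (fun x => s x \in B)) -[RHS](card_imset _ (@perm_inj _ s)).
apply: eq_card => z; rewrite !inE; apply/andP/imsetP.
  by move=> [Hz /imsetP [x Hx E]]; exists x => //; rewrite inE Hx -E Hz.
by move=> [x]; rewrite inE => /andP [Hx Hsx] ->; rewrite Hsx imset_f.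
Qed.

Lemma indep_le (A : {set T}) : A \subset bd -> indep A -> #|A| <= #|bd| - sdim e.
Proof.
move=> HA Hi.
have Hc : cov e (bd :\: A).
  apply/forallP => u; apply/forallP => v; apply/implyP => Hm.
  have /andP [Hu Hv] := mmd_bd Hm.
  rewrite !in_setD Hu Hv !andbT -negb_and; apply/negP => Huv.
  by have := implyP (forallP (forallP Hi u) v) Huv; rewrite Hm.
have := sdim_le se conn c2 Hc.
have := cardsID A bd; rewrite (setIidPr HA); lia.
Qed.


Lemma lemmaL (A : {set T}) : A \subset bd -> indep A ->
  #|A| * #|bd| <= (#|bd| - sdim e) * #|NA A|.
Proof.
move=> HA HiA.
case: (set_0Vmem bd) => [E0 | [x0 Hx0]].
  suff -> : #|A| = 0 by [].
  by apply/eqP; rewrite cards_eq0 -subset0 -E0.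
have [C [HcC HCbd HCs]] := min_cover se conn c2.
set B := bd :\: C.
have HB : #|B| = #|bd| - sdim e by rewrite cardsDS // HCs.
have HBbd : B \subset bd by apply: subsetDl.
have HBi : forall z w, z \in B -> w \in B -> ~~ r z w.
  move=> z w Hz Hw; apply/negP => Hr.
  have := implyP (forallP (forallP HcC z) w) Hr.
  by move: Hz Hw; rewrite !in_setD => /andP [/negbTE -> _] /andP [/negbTE -> _].
have HANA : A \subset NA A.
  apply/subsetP => a Ha; rewrite inE (subsetP HA a Ha) /=.
  by apply/existsP; exists a; rewrite Ha eqxx.
have HNAbd : NA A \subset bd by apply/subsetP => x; rewrite inE => /andP [].
set c := Ncnt x0 x0.
have Hc : forall x b, x \in bd -> b \in bd -> Ncnt x b = c.
  by move=> x b Hx Hb; apply/eqP; rewrite eqn_leq !Ncnt_le.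
have Hc0 : 0 < c.
  rewrite /c /Ncnt card_gt0; apply/set0Pn; exists 1%g.
  by rewrite inE aut1 perm1 eqxx.
have Step1 : forall s, s \in Aut -> #|A| <= #|B :&: s @: NA A|.
  move=> s Hs; set Y := s @: NA A.
  set B' := (B :\: Y) :|: s @: A.
  have help : forall z a, z \in B :\: Y -> a \in A -> ~~ r z (s a).
    move=> z a Hz Ha; apply/negP => Hr.
    have Hzbd : z \in bd by apply: (subsetP HBbd); move: Hz; rewrite in_setD => /andP [].
    have [z' Hz' Ez] := aut_onto Hs Hzbd.
    have Habd : a \in bd by apply: (subsetP HA).
    move: Hr; rewrite -Ez (aut_r Hs Hz' Habd) mmd_sym => Hr.
    have : z' \in NA A by rewrite inE Hz' /=; apply/existsP; exists a; rewrite Ha Hr orbT.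
    move=> Hz'NA; move: Hz; rewrite in_setD => /andP [/negP []].
    by rewrite -Ez imset_f.
  have HB'i : indep B'.
    apply/forallP => z; apply/forallP => w; apply/implyP => /andP [].
    rewrite !in_setU => /orP [Hz | /imsetP [a Ha ->]] /orP [Hw | /imsetP [a' Ha' ->]].
    - by apply: HBi; [move: Hz | move: Hw]; rewrite in_setD => /andP [].
    - exact: help.
    - by rewrite mmd_sym; apply: help.
    - rewrite aut_r ?(subsetP HA) //.
      by apply: implyP (forallP (forallP HiA a) a') _; rewrite Ha Ha'.
  have HB'bd : B' \subset bd.
    apply/subsetP => z; rewrite in_setU => /orP [|/imsetP [a Ha ->]].
      by rewrite in_setD => /andP [_ /(subsetP HBbd)].
    by apply: aut_bd => //; apply: (subsetP HA).
  have Hle := indep_le HB'bd HB'i.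
  have Hdisj : (B :\: Y) :&: s @: A = set0.
    apply/setP => z; rewrite !inE; apply/negP => /andP [/andP [HzY _] /imsetP [a Ha Ez]].
    by move/negP: HzY; apply; rewrite Ez imset_f // (subsetP HANA).
  have := cardsU (B :\: Y) (s @: A); rewrite Hdisj cards0 subn0 card_imset; last exact: perm_inj.
  rewrite /B' in Hle; have := cardsID Y B; lia.
have Step2 : \sum_(s in Aut) #|B :&: s @: NA A| = #|NA A| * (#|B| * c).
  under eq_bigr => s _ do rewrite card_inter.
  rewrite exchange_big /= -sum_nat_const; apply: eq_bigr => x Hx.
  rewrite (sum_b2n Aut (fun s => s x \in B)) cnt -sum_nat_const.
  apply: eq_bigr => b Hb; apply: Hc; first exact: (subsetP HNAbd).
  exact: (subsetP HBbd).
have Step3 : #|Aut| = #|bd| * c.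
  have -> : Aut = [set s in Aut | s x0 \in bd].
    by apply/setP => s; rewrite inE; case: (boolP (s \in Aut)) => // Hs; rewrite aut_bd.
  rewrite cnt -sum_nat_const; apply: eq_bigr => b Hb; exact: Hc.
have Hsum : #|Aut| * #|A| <= #|NA A| * (#|B| * c).
  by rewrite -Step2 -sum_nat_const; apply: leq_sum.
rewrite Step3 HB in Hsum.
rewrite -(leq_pmul2l Hc0); move: Hsum; set nb := #|bd|; set na := #|A|; set nn := #|NA A|.
set al := nb - sdim e; nia.
Qed.

End VT.

Lemma fiber0 (T1 T2 : finType) (J : {set T1 * T2}) :
  #|J| = \sum_(g : T1) \sum_(h : T2) (if (g, h) \in J then 1 else 0).
Proof.
have := pair_big xpredT xpredT (fun g h => if (g, h) \in J then 1 else 0).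
move=> /= ->; rewrite -sum1_card big_mkcond /=; apply: eq_bigr => [[g h]] _ //.
Qed.

Lemma fiber2 (T1 T2 : finType) (J : {set T1 * T2}) :
  #|J| = \sum_(g : T1) #|[set h | (g, h) \in J]|.
Proof.
rewrite fiber0; apply: eq_bigr => g _; rewrite -sum1_card [RHS]big_mkcond; apply: eq_bigr => h _.
by rewrite inE.
Qed.

Lemma fiber1 (T1 T2 : finType) (J : {set T1 * T2}) :
  #|J| = \sum_(h : T2) #|[set g | (g, h) \in J]|.
Proof.
rewrite fiber0 exchange_big /=.
apply: eq_bigr => h _; rewrite -sum1_card [RHS]big_mkcond; apply: eq_bigr => g _.
by rewrite inE.
Qed.

Lemma NA_bd (T : finType) (e : rel T) (A : {set T}) x : x \in NA e A -> x \in boundary e.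
Proof. by rewrite inE => /andP []. Qed.

Lemma NA_ex (T : finType) (e : rel T) (A : {set T}) x : x \in NA e A ->
  exists2 a, a \in A & (a == x) || mutually_max_distant e a x.
Proof. by rewrite inE => /andP [_ /existsP [a /andP [Ha H]]]; exists a. Qed.

Section Zhang.
Variables (T1 T2 : finType) (e1 : rel T1) (e2 : rel T2) (a1 a2 : nat).
Local Notation r1 := (mutually_max_distant e1).
Local Notation r2 := (mutually_max_distant e2).
Local Notation bd1 := (boundary e1).
Local Notation bd2 := (boundary e2).
Hypothesis L1 : forall A : {set T1}, A \subset bd1 -> indep e1 A -> #|A| * #|bd1| <= a1 * #|NA e1 A|.
Hypothesis L2 : forall A : {set T2}, A \subset bd2 -> indep e2 A -> #|A| * #|bd2| <= a2 * #|NA e2 A|.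

Lemma zhang (I : {set T1 * T2}) : I \subset setX bd1 bd2 ->
  (forall x y, x \in I -> y \in I -> ~~ (r1 x.1 y.1 && r2 x.2 y.2)) ->
  #|I| * (#|bd1| * #|bd2|) <= maxn (a1 * #|bd2|) (a2 * #|bd1|) * (#|bd1| * #|bd2|).
Proof.
move=> HI Hind.
have HIb : forall g h, (g, h) \in I -> (g \in bd1) && (h \in bd2).
  by move=> g h /(subsetP HI); rewrite inE.
set I2 := [set x in I | [exists g, r1 g x.1 && ((g, x.2) \in I)]].
set As := fun h => [set g | (g, h) \in I :\: I2].
set Bg := fun g => [set h | (g, h) \in I2].
set RG := [set x | x.1 \in NA e1 (As x.2)].
set R2 := [set x | x.2 \in NA e2 (Bg x.1)].
have I2I : I2 \subset I by apply/subsetP => x; rewrite inE => /andP [].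
have F1b : forall h, As h \subset bd1.
  move=> h; apply/subsetP => g; rewrite !inE => /andP [_ H].
  by case/andP: (HIb _ _ H) => Hg _; move: Hg; rewrite inE.
have F1i : forall h, indep e1 (As h).
  move=> h; apply/forallP => g; apply/forallP => g'; apply/implyP.
  rewrite !inE => /andP [/andP [HnI2 Hg] /andP [_ Hg']]; apply/negP => Hr.
  move: HnI2; rewrite Hg /= => /existsPn /(_ g').
  by rewrite mmd_sym Hr Hg'.
have F2b : forall g, Bg g \subset bd2.
  move=> g; apply/subsetP => h; rewrite !inE => /andP [H _].
  by case/andP: (HIb _ _ H) => _ Hh; move: Hh; rewrite inE.
have F2i : forall g, indep e2 (Bg g).
  move=> g; apply/forallP => h; apply/forallP => h'; apply/implyP.
  rewrite !inE => /andP [/andP [Hg /existsP [g' /andP [Hr1 Hg']]] /andP [Hh' _]].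
  apply/negP => Hr2.
  by have := Hind _ _ Hg' Hh'; rewrite /= Hr1 Hr2.
have F3 : RG :&: R2 = set0.
  apply/setP => [[g h]]; rewrite !inE /=; apply/negP.
  move=> /andP [/andP [_ /existsP [g0 /andP [Hg0 Hgg]]] /andP [_ /existsP [h0 /andP [Hh0 Hhh]]]].
  move: Hg0 Hh0; rewrite !inE /= => /andP [HnI2 Hg0I] Hh0I2.
  have Hh0I : (g, h0) \in I by case/andP: Hh0I2.
  case/orP: Hgg => [/eqP Eg | Hrg]; case/orP: Hhh => [/eqP Eh | Hrh].
  - by subst; rewrite Hh0I2 in HnI2.
  - subst g0; move: Hh0I2 => /andP [_ /existsP [g' /andP [Hr1 Hg']]].
    by have := Hind _ _ Hg' Hg0I; rewrite /= Hr1 Hrh.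
  - subst h0; move: HnI2; rewrite Hg0I /= => /existsPn /(_ g).
    by rewrite mmd_sym Hrg Hh0I.
  - by have := Hind _ _ Hg0I Hh0I; rewrite /= Hrg mmd_sym Hrh.
have F4 : RG :|: R2 \subset setX bd1 bd2.
  apply/subsetP => [[g h]]; rewrite in_setX in_setU /= => /orP [] Hx.
    have : g \in NA e1 (As h) by move: Hx; rewrite inE.
    move=> Hn; rewrite (NA_bd Hn) /=.
    have [a Ha _] := NA_ex Hn.
    by move: Ha; rewrite inE in_setD => /andP [_ /HIb /andP [_ ->]].
  have : h \in NA e2 (Bg g) by move: Hx; rewrite inE.
  move=> Hn; rewrite (NA_bd Hn) andbT.
  have [a Ha _] := NA_ex Hn.
  by move: Ha; rewrite inE => /(subsetP I2I) /HIb /andP [->].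
have HRR : #|RG| + #|R2| <= #|bd1| * #|bd2|.
  have := cardsU RG R2; rewrite F3 cards0 subn0 => <-.
  by rewrite -cardsX; apply: subset_leq_card.
have E1 : #|I :\: I2| = \sum_h #|As h| by rewrite fiber1.
have E2 : #|RG| = \sum_h #|NA e1 (As h)|.
  rewrite fiber1; apply: eq_bigr => h _; apply: eq_card => g; by rewrite !inE.
have E3 : #|I2| = \sum_g #|Bg g| by rewrite fiber2.
have E4 : #|R2| = \sum_g #|NA e2 (Bg g)|.
  rewrite fiber2; apply: eq_bigr => g _; apply: eq_card => h; by rewrite !inE.
have B1 : #|I :\: I2| * #|bd1| <= a1 * #|RG|.
  rewrite E1 E2 big_distrl big_distrr /=; apply: leq_sum => h _; exact: L1.
have B2 : #|I2| * #|bd2| <= a2 * #|R2|.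
  rewrite E3 E4 big_distrl big_distrr /=; apply: leq_sum => g _; exact: L2.
have EI : #|I| = #|I :\: I2| + #|I2|.
  by have := cardsID I2 I; rewrite (setIidPr I2I); lia.
set M := maxn (a1 * #|bd2|) (a2 * #|bd1|).
have M1 : a1 * #|bd2| <= M by apply: leq_maxl.
have M2 : a2 * #|bd1| <= M by apply: leq_maxr.
have C1 : #|I :\: I2| * (#|bd1| * #|bd2|) <= M * #|RG|.
  apply: (@leq_trans (a1 * #|bd2| * #|RG|)); last by apply: leq_mul.
  have := leq_mul B1 (leqnn #|bd2|); nia.
have C2 : #|I2| * (#|bd1| * #|bd2|) <= M * #|R2|.
  apply: (@leq_trans (a2 * #|bd1| * #|R2|)); last by apply: leq_mul.
  have := leq_mul B2 (leqnn #|bd1|); nia.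
have := leq_mul (leqnn M) HRR.
rewrite EI; nia.
Qed.

End Zhang.

Lemma bd_pos (T : finType) (e : rel T) : symmetric e -> irreflexive e ->
  connected_graph e -> 1 < #|T| -> 0 < #|boundary e|.
Proof.
move=> se ie conn c2; rewrite card_gt0; apply/negP => /eqP E0.
have Hc : cov e set0.
  apply/forallP => u; apply/forallP => v; apply/implyP => /mmd_bd /andP [Hu _].
  by rewrite E0 inE in Hu.
have := Hc; rewrite -(srsE se conn c2) => /forallP Hs.
case: (pickP (fun _ : T => true)) => [u _|H]; last first.
  by move: c2; rewrite eq_card0.
have [z Hz] := has_nbr se conn c2 u.
have Huz : u != z by apply: contraTneq Hz => ->; rewrite ie.
have := implyP (forallP (Hs u) z) Huz.
by case/existsP => w; rewrite inE.
Qed.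

Theorem theorem14 (T1 T2 : finType) (e1 : rel T1) (e2 : rel T2) :
  simple_graph e1 -> simple_graph e2 ->
  connected_graph e1 -> connected_graph e2 ->
  1 < #|T1| -> 1 < #|T2| ->
  SR_vertex_transitive e1 -> SR_vertex_transitive e2 ->
  sdim (cart_prod e1 e2) =
    minn (#|boundary e1| * sdim e2) (#|boundary e2| * sdim e1).
Proof.
move=> [se1 ie1] [se2 ie2] conn1 conn2 c1 c2 vt1 vt2.
set n1 := #|boundary e1|; set n2 := #|boundary e2|.
set b1 := sdim e1; set b2 := sdim e2.
have seP := cart_sym se1 se2.
have ieP := cart_irr ie1 ie2.
have connP := cart_conn conn1 conn2.
have cP := cart_card c1 c2.
have mP := mmdP se1 ie1 conn1 c1 se2 ie2 conn2 c2.
have b1n : b1 <= n1 by exact: (sdim_le se1 conn1 c1 (cov_bd e1)).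
have b2n : b2 <= n2 by exact: (sdim_le se2 conn2 c2 (cov_bd e2)).
have n1p : 0 < n1 by apply: bd_pos.
have n2p : 0 < n2 by apply: bd_pos.
have [C1 [HC1 _ EC1]] := min_cover se1 conn1 c1.
have [C2 [HC2 _ EC2]] := min_cover se2 conn2 c2.
have U1 : sdim (cart_prod e1 e2) <= n2 * b1.
  have -> : n2 * b1 = #|setX C1 (boundary e2)| by rewrite cardsX EC1 mulnC.
  apply: (sdim_le seP connP cP).
  apply/forallP => [[u1 u2]]; apply/forallP => [[v1 v2]]; apply/implyP; rewrite mP /= => /andP [H1 H2].
  have /andP [Hu2 Hv2] := mmd_bd H2.
  have := implyP (forallP (forallP HC1 u1) v1) H1.
  by rewrite !in_setX Hu2 Hv2 !andbT.
have U2 : sdim (cart_prod e1 e2) <= n1 * b2.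
  have -> : n1 * b2 = #|setX (boundary e1) C2| by rewrite cardsX EC2.
  apply: (sdim_le seP connP cP).
  apply/forallP => [[u1 u2]]; apply/forallP => [[v1 v2]]; apply/implyP; rewrite mP /= => /andP [H1 H2].
  have /andP [Hu1 Hv1] := mmd_bd H1.
  have := implyP (forallP (forallP HC2 u2) v2) H2.
  by rewrite !in_setX Hu1 Hv1.
apply/eqP; rewrite eqn_leq leq_min U1 U2 /=.
have Hnn : n1 * n2 <= #|{: T1 * T2}|.
  by rewrite card_prod leq_mul // max_card.
apply: (sdim_ge seP connP cP).
  apply: leq_trans (geq_minl _ _) _; apply: leq_trans Hnn; exact: leq_mul.
move=> S HS.
set X := setX (boundary e1) (boundary e2).
set I := X :\: S.
have HIX : I \subset X by apply: subsetDl.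
have HIi : forall x y, x \in I -> y \in I ->
    ~~ (mutually_max_distant e1 x.1 y.1 && mutually_max_distant e2 x.2 y.2).
  move=> x y Hx Hy; rewrite -mP; apply/negP => Hm.
  have := implyP (forallP (forallP HS x) y) Hm.
  by move: Hx Hy; rewrite !in_setD => /andP [/negbTE -> _] /andP [/negbTE -> _].
have L1 := lemmaL se1 conn1 c1 vt1.
have L2 := lemmaL se2 conn2 c2 vt2.
have Z : #|I| * (n1 * n2) <= maxn ((n1 - b1) * n2) ((n2 - b2) * n1) * (n1 * n2)
  := zhang L1 L2 HIX HIi.
have Hnp : 0 < n1 * n2 by rewrite muln_gt0 n1p n2p.
rewrite leq_pmul2r // in Z.
have HX : #|X| = n1 * n2 by rewrite cardsX.
have := cardsID S X.
have : #|X :&: S| <= #|S| by apply: subset_leq_card; apply: subsetIr.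
rewrite -/I => HSle HID.
have P1 : (n1 - b1) * n2 = n1 * n2 - b1 * n2 by rewrite mulnBl.
have P2 : (n2 - b2) * n1 = n2 * n1 - b2 * n1 by rewrite mulnBl.
have Q1 : b1 * n2 <= n1 * n2 by apply: leq_mul.
have Q2 : b2 * n1 <= n2 * n1 by apply: leq_mul.
rewrite -/b1 -/b2 in Z P1 P2 Q1 Q2.
move: Z; rewrite P1 P2 (mulnC n2 n1) (mulnC b2 n1) (mulnC n2 b1) in Q1 Q2 *.
rewrite (mulnC b1 n2) in Q1 * .
move: Q1 Q2 HX; clear P1 P2; generalize (n1 * n2) (n1 * b2) (n2 * b1) => p q r; lia.
Qed.
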